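(* Let $\mathbf{E}=(E_1,\dots,E_K)$ be fixed with $\sum_{i=1}^K E_i\le E_{max}$, $0\le E_i< E_i^b+\eta_iP_Bh_i$ for all $i$, and $\sum_{j=1}^K\alpha_jE_j>0$. Then, among all $\boldsymbol{\tau}=(\tau_0,\dots,\tau_K)$ satisfying $\sum_{i=0}^K\tau_i\le 1$, $\tau_i\ge 0$ ($i=0,\dots,K$), and $E_i\le E_i^b+\eta_iP_Bh_i\tau_0$ ($i=1,\dots,K$), the objective $\sum_{i=1}^K R_i(E_i,\tau_i)$ is maximized by $$\tau_0^*=\min\left[\left(\max_i\frac{E_i-E_i^b}{\eta_iP_Bh_i}\right)^{+},\,1\right],\qquad \tau_i^*=\frac{\alpha_iE_i(1-\tau_0^* )}{\sum_{j=1}^K\alpha_jE_j},\quad i=1,\dots,K,$$ where $(x)^+=\max(0,x)$.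
   Context: Fix an integer $K\ge 1$ and positive constants $E_{max}$, $P_B$, and, for $i=1,\dots,K$, $E_i^b\ge 0$, $\eta_i\in(0,1)$, $h_i>0$, $g_i>0$, $\Gamma>0$, $\sigma^2>0$. Let $\alpha_i = g_i/(\Gamma\sigma^2)$. For $E_i\ge 0$, $\tau_i\ge 0$ define $R_i(E_i,\tau_i)=\tau_i\log_2\!\left(1+\alpha_i E_i/\tau_i\right)$ for $\tau_i>0$ and $R_i(E_i,0)=0$. *)

(* Defs.v *)
From Stdlib Require Import Reals Lra Lia.
Open Scope R_scope.

Fixpoint sumR (n : nat) (f : nat -> R) : R :=
  match n with
  | O => 0
  | S m => sumR m f + f m
  end.

Fixpoint maxupto (n : nat) (f : nat -> R) : R :=
  match n with
  | O => f O
  | S m => Rmax (maxupto m f) (f (S m))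
  end.

Definition pos_part (x : R) : R := Rmax 0 x.

Definition log2 (x : R) : R := ln x / ln 2.

Definition rate (alpha E tau : R) : R :=
  if Rlt_dec 0 tau then tau * log2 (1 + alpha * E / tau) else 0.

(* Main.v *)
Require Import Defs.
From Stdlib Require Import Reals Lra Lia.
Open Scope R_scope.

Lemma ln_le_sub1 x : 0 < x -> ln x <= x - 1.
Proof. intro Hx. pose proof (exp_ineq1_le (ln x)). rewrite exp_ln in H; lra. Qed.

Lemma sumR_le n f g : (forall i, (i < n)%nat -> f i <= g i) -> sumR n f <= sumR n g.
Proof.
  induction n; simpl; intros H; [lra|].
  assert (sumR n f <= sumR n g) by (apply IHn; intros; apply H; lia).
  specialize (H n ltac:(lia)); lra.
Qed.

Lemma sumR_ext n f g : (forall i, (i < n)%nat -> f i = g i) -> sumR n f = sumR n g.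
Proof.
  induction n; simpl; intros H; [lra|].
  rewrite IHn by (intros; apply H; lia). rewrite (H n ltac:(lia)); lra.
Qed.

Lemma sumR_lin n a b f g :
  sumR n (fun i => a * f i + b * g i) = a * sumR n f + b * sumR n g.
Proof. induction n; simpl; [ring|]. rewrite IHn; ring. Qed.

Lemma sumR_scal n a f : sumR n (fun i => a * f i) = a * sumR n f.
Proof. induction n; simpl; [ring|]. rewrite IHn; ring. Qed.

Lemma maxupto_ge n f i : (i <= n)%nat -> f i <= maxupto n f.
Proof.
  induction n; simpl; intros H.
  - replace i with O by lia; lra.
  - destruct (Nat.eq_dec i (S n)) as [->|Hne].
    + apply Rmax_r.
    + eapply Rle_trans; [apply IHn; lia|apply Rmax_l].
Qed.

Lemma maxupto_lub n f M : (forall i, (i <= n)%nat -> f i <= M) -> maxupto n f <= M.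
Proof.
  induction n; simpl; intros H; [apply H; lia|].
  apply Rmax_lub; [apply IHn; intros; apply H; lia| apply H; lia].
Qed.

Lemma maxupto_lt n f M : (forall i, (i <= n)%nat -> f i < M) -> maxupto n f < M.
Proof.
  induction n; simpl; intros H; [apply H; lia|].
  apply Rmax_lub_lt; [apply IHn; intros; apply H; lia| apply H; lia].
Qed.

Definition rateN (c t : R) : R := if Rlt_dec 0 t then t * ln (1 + c / t) else 0.

Lemma rate_N a E t : rate a E t = / ln 2 * rateN (a * E) t.
Proof. unfold rate, rateN, log2. destruct (Rlt_dec 0 t); [|ring]. unfold Rdiv; ring. Qed.

Lemma rateN_bound c t r : 0 <= c -> 0 <= t -> 0 < r ->
  rateN c t <= (ln (1 + r) - r / (1 + r)) * t + / (1 + r) * c.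
Proof.
  intros Hc Ht Hr. unfold rateN. destruct (Rlt_dec 0 t) as [Ht'|Ht'].
  - set (x := (1 + c / t) / (1 + r)).
    assert (Hx : 0 < x). { unfold x. apply Rdiv_lt_0_compat; [|lra].
      assert (0 <= c / t) by (unfold Rdiv; apply Rmult_le_pos; [lra|apply Rlt_le, Rinv_0_lt_compat; lra]). lra. }
    assert (E1 : 1 + c / t = x * (1 + r)) by (unfold x; field; lra).
    rewrite E1, ln_mult by lra.
    pose proof (ln_le_sub1 x Hx).
    assert (t * ln x <= t * (x - 1)) by (apply Rmult_le_compat_l; lra).
    assert (E2 : t * (x - 1) = (c - t * r) / (1 + r)) by (unfold x; field; lra).
    assert (E3 : (ln (1 + r) - r / (1 + r)) * t + / (1 + r) * c
                 = t * ln (1 + r) + (c - t * r) / (1 + r)) by (field; lra).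
    rewrite E3. lra.
  - replace t with 0 by lra. assert (0 <= / (1 + r) * c).
    { apply Rmult_le_pos; [apply Rlt_le, Rinv_0_lt_compat; lra| lra]. } lra.
Qed.

Lemma A_nonneg r : 0 < r -> 0 <= ln (1 + r) - r / (1 + r).
Proof.
  intro Hr. pose proof (ln_le_sub1 (/ (1 + r)) ltac:(apply Rinv_0_lt_compat; lra)).
  rewrite ln_Rinv in H by lra.
  assert (/ (1 + r) - 1 = - (r / (1 + r))) by (field; lra). lra.
Qed.

Lemma rateN_eq c S C : 0 <= c -> 0 < S -> 0 < C ->
  rateN c (c * S / C) = (ln (1 + C / S) - C / S / (1 + C / S)) * (c * S / C)
                         + / (1 + C / S) * c.
Proof.
  intros Hc HS HC. assert (0 < C / S) by (apply Rdiv_lt_0_compat; lra).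
  unfold rateN. destruct (Rlt_dec 0 (c * S / C)) as [Hp|Hp].
  - assert (c <> 0). { intro; subst. unfold Rdiv in Hp. lra. }
    replace (c / (c * S / C)) with (C / S) by (field; lra). field; lra.
  - assert (c = 0). { destruct Hc as [Hc|]; auto. exfalso; apply Hp.
      apply Rdiv_lt_0_compat; [apply Rmult_lt_0_compat|]; lra. }
    subst. unfold Rdiv. ring.
Qed.

Theorem theorem2
  (K : nat) (Emax PB Gamma sigma2 : R) (Eb eta h g E : nat -> R)
  (HK : (1 <= K)%nat) (HEmax : 0 < Emax) (HPB : 0 < PB)
  (HGamma : 0 < Gamma) (Hsigma2 : 0 < sigma2)
  (HEb : forall i, (i < K)%nat -> 0 <= Eb i)
  (Heta : forall i, (i < K)%nat -> 0 < eta i < 1)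
  (Hh : forall i, (i < K)%nat -> 0 < h i)
  (Hg : forall i, (i < K)%nat -> 0 < g i)
  (HEsum : sumR K E <= Emax)
  (HEi : forall i, (i < K)%nat -> 0 <= E i < Eb i + eta i * PB * h i)
  (HaE : 0 < sumR K (fun j => g j / (Gamma * sigma2) * E j)) :
  let alpha := fun i => g i / (Gamma * sigma2) in
  let tau0s := Rmin (pos_part (maxupto (K - 1)
                   (fun i => (E i - Eb i) / (eta i * PB * h i)))) 1 in
  let taus := fun i => alpha i * E i * (1 - tau0s)
                       / sumR K (fun j => alpha j * E j) in
  let feasible := fun (t0 : R) (t : nat -> R) =>
    t0 + sumR K t <= 1 /\ 0 <= t0 /\
    (forall i, (i < K)%nat -> 0 <= t i) /\
    (forall i, (i < K)%nat -> E i <= Eb i + eta i * PB * h i * t0) in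
  let obj := fun (t : nat -> R) => sumR K (fun i => rate (alpha i) (E i) (t i)) in
  feasible tau0s taus /\
  (forall (t0 : R) (t : nat -> R), feasible t0 t -> obj t <= obj taus).
Proof.
  intros alpha tau0s taus feasible obj.
  set (ratio := fun i => (E i - Eb i) / (eta i * PB * h i)) in *.
  set (M := maxupto (K - 1) ratio) in *.
  set (c := fun i => alpha i * E i).
  set (C := sumR K c).
  assert (HC : 0 < C) by exact HaE.
  assert (Hden : forall i, (i < K)%nat -> 0 < eta i * PB * h i).
  { intros i Hi. specialize (Heta i Hi). specialize (Hh i Hi).
    apply Rmult_lt_0_compat; [apply Rmult_lt_0_compat|]; lra. }
  assert (Hc : forall i, (i < K)%nat -> 0 <= c i).
  { intros i Hi. unfold c, alpha. apply Rmult_le_pos; [|apply HEi, Hi].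
    apply Rlt_le, Rdiv_lt_0_compat; [apply Hg, Hi| apply Rmult_lt_0_compat; lra]. }
  assert (HM1 : M < 1).
  { apply maxupto_lt. intros i Hi. unfold ratio.
    assert (Hi' : (i < K)%nat) by lia. specialize (Hden i Hi'). specialize (HEi i Hi').
    apply Rmult_lt_reg_r with (eta i * PB * h i); auto.
    unfold Rdiv. rewrite Rmult_assoc, Rinv_l by lra. lra. }
  assert (Htau : tau0s = Rmax 0 M).
  { unfold tau0s, pos_part. apply Rmin_left. apply Rmax_lub; lra. }
  assert (Htau0 : 0 <= tau0s) by (rewrite Htau; apply Rmax_l).
  assert (HtauM : M <= tau0s) by (rewrite Htau; apply Rmax_r).
  assert (HS : 0 < 1 - tau0s) by (rewrite Htau; assert (Rmax 0 M < 1) by (apply Rmax_lub_lt; lra); lra).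
  set (S := 1 - tau0s) in *.
  assert (Htaus : forall i, taus i = c i * S / C) by reflexivity.
  assert (HsumT : sumR K taus = S).
  { rewrite (sumR_ext K taus (fun i => S / C * c i)) by (intros; rewrite Htaus; field; lra).
    rewrite sumR_scal. fold C. field; lra. }
  assert (Hratio : forall i, (i < K)%nat -> ratio i <= M).
  { intros i Hi. apply maxupto_ge. lia. }
  split.
  { unfold feasible. repeat split.
    - rewrite HsumT. unfold S. lra.
    - exact Htau0.
    - intros i Hi. rewrite Htaus. apply Rmult_le_pos; [apply Rmult_le_pos; auto; lra|].
      apply Rlt_le, Rinv_0_lt_compat; lra.
    - intros i Hi. specialize (Hratio i Hi). specialize (Hden i Hi).
      unfold ratio in Hratio.
      assert (E i - Eb i <= eta i * PB * h i * tau0s); [|lra].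
      apply Rmult_le_reg_r with (/ (eta i * PB * h i)); [apply Rinv_0_lt_compat; lra|].
      replace (eta i * PB * h i * tau0s * / (eta i * PB * h i)) with tau0s by (field; specialize (Heta i Hi); specialize (Hh i Hi); repeat split; lra).
      unfold Rdiv in Hratio. lra. }
  intros t0 t [Hsum [Ht0 [Ht Hen]]].
  assert (Ht0M : tau0s <= t0).
  { rewrite Htau. apply Rmax_lub; auto. apply maxupto_lub. intros i Hi.
    assert (Hi' : (i < K)%nat) by lia. specialize (Hen i Hi'). specialize (Hden i Hi').
    unfold ratio. apply Rmult_le_reg_r with (eta i * PB * h i); auto.
    unfold Rdiv. rewrite Rmult_assoc, Rinv_l by lra. lra. }
  assert (HT : sumR K t <= S) by (unfold S; lra).
  set (r := C / S).
  assert (Hr : 0 < r) by (apply Rdiv_lt_0_compat; lra).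
  set (A := ln (1 + r) - r / (1 + r)).
  set (B := / (1 + r)).
  assert (HA : 0 <= A) by (apply A_nonneg; auto).
  unfold obj.
  rewrite (sumR_ext K _ (fun i => / ln 2 * rateN (c i) (t i))) by (intros; apply rate_N).
  rewrite (sumR_ext K (fun i => rate (alpha i) (E i) (taus i))
             (fun i => / ln 2 * rateN (c i) (taus i))) by (intros; apply rate_N).
  rewrite !sumR_scal.
  assert (Hln2 : 0 < / ln 2) by (apply Rinv_0_lt_compat; rewrite <- ln_1; apply ln_increasing; lra).
  apply Rmult_le_compat_l; [lra|].
  assert (E1 : sumR K (fun i => rateN (c i) (taus i)) = A * S + B * C).
  { rewrite (sumR_ext K _ (fun i => A * taus i + B * c i)).
    - rewrite sumR_lin, HsumT. reflexivity.
    - intros i Hi. rewrite Htaus. unfold A, B, r. apply rateN_eq; auto. }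
  rewrite E1.
  eapply Rle_trans.
  { apply (sumR_le K _ (fun i => A * t i + B * c i)). intros i Hi.
    apply rateN_bound; auto. }
  rewrite sumR_lin. fold C.
  assert (A * sumR K t <= A * S) by (apply Rmult_le_compat_l; auto). lra.
Qed.
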